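(* Let $a\ge b\ge2$ and $k$ be integers with $a+b+1\le k\le a+2b-1$. Then for every $(i,j)\in Q_3$ we have $w_2,w_3,w_4,w_6\in\mathcal{R}^k_{(a,b),(i,j)}$.
   Context: $\widehat{\mathfrak{su}}(3)_k$ fusion. Let $P_+^k=\{(\lambda_1,\lambda_2)\in\mathbb{Z}_{\ge0}^2:\lambda_1+\lambda_2\le k\}$. For $\lambda,\mu,\nu\in P_+^k$ set - $\mathcal{A}=\tfrac13[2(\lambda_1+\mu_1+\nu_2)+\lambda_2+\mu_2+\nu_1]$, - $\mathcal{B}=\tfrac13[\lambda_1+\mu_1+\nu_2+2(\lambda_2+\mu_2+\nu_1)]$, - $k_0^{\max}=\min(\mathcal{A},\mathcal{B})$, - $k_0^{\min}=\max(\lambda_1+\lambda_2,\mu_1+\mu_2,\nu_1+\nu_2,\mathcal{A}-\lambda_1,\mathcal{A}-\mu_1,\mathcal{A}-\nu_2,\mathcal{B}-\lambda_2,\mathcal{B}-\mu_2,\mathcal{B}-\nu_1)$. The fusion multiplicity is $N^{(k)\nu}_{\lambda,\mu}=\min(k_0^{\max},k)-k_0^{\min}+1$ if $\mathcal{A},\mathcal{B}$ are nonnegative integers, $k_0^{\max}\ge k_0^{\min}$ and $k\ge k_0^{\min}$; otherwise it is $0$. The set $\mathcal{R}^k_{\lambda,\mu}$ is $\{\nu\in P_+^k:N^{(k)\nu}_{\lambda,\mu}\ne0\}$. The candidate weights are $w_1=(a-1,b+2)$, $w_2=(a+2,b-1)$, $w_3=(a+1,b-2)$, $w_4=(a-2,b+1)$,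 $w_5=(a+1,b+1)$, $w_6=(a-1,b-1)$. The set $Q_3$ is defined by $Q_3=\{(p-2k+2a+2b,p+k-a-b):p\in\mathbb{Z},\ 2k-2a-2b\le p\le k-a-1\}$. *)

(* Defs.v *)
From mathcomp Require Import all_boot all_order all_algebra.
Set Implicit Arguments. Unset Strict Implicit. Unset Printing Implicit Defensive.
Import Order.TTheory GRing.Theory Num.Theory.
Local Open Scope ring_scope.

Definition weight := (int * int)%type.

Definition inPk (k : int) (l : weight) : bool :=
  [&& 0 <= l.1, 0 <= l.2 & l.1 + l.2 <= k].

Definition A3 (l m n : weight) : int := 2 * (l.1 + m.1 + n.2) + l.2 + m.2 + n.1.
Definition B3 (l m n : weight) : int := l.1 + m.1 + n.2 + 2 * (l.2 + m.2 + n.1).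

Definition AB_ok (l m n : weight) : bool :=
  [&& (3 %| A3 l m n)%Z, (3 %| B3 l m n)%Z, 0 <= A3 l m n & 0 <= B3 l m n].

Definition Aval (l m n : weight) : int := (A3 l m n %/ 3)%Z.
Definition Bval (l m n : weight) : int := (B3 l m n %/ 3)%Z.

Definition k0max (l m n : weight) : int := Num.min (Aval l m n) (Bval l m n).

Definition k0min (l m n : weight) : int :=
  let A := Aval l m n in let B := Bval l m n in
  Num.max (l.1 + l.2) (Num.max (m.1 + m.2) (Num.max (n.1 + n.2)
  (Num.max (A - l.1) (Num.max (A - m.1) (Num.max (A - n.2)
  (Num.max (B - l.2) (Num.max (B - m.2) (B - n.1)))))))).

Definition fusionN (k : int) (l m n : weight) : int :=
  if [&& AB_ok l m n, k0min l m n <= k0max l m n & k0min l m n <= k]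
  then Num.min (k0max l m n) k - k0min l m n + 1 else 0.

Definition inR (k : int) (l m n : weight) : bool :=
  inPk k n && (fusionN k l m n != 0).

Definition w2 (a b : int) : weight := (a + 2, b - 1).
Definition w3 (a b : int) : weight := (a + 1, b - 2).
Definition w4 (a b : int) : weight := (a - 2, b + 1).
Definition w6 (a b : int) : weight := (a - 1, b - 1).

Definition Q3 (a b k : int) (ij : weight) : Prop :=
  exists p : int, [/\ 2 * k - 2 * a - 2 * b <= p, p <= k - a - 1 &
     ij = (p - 2 * k + 2 * a + 2 * b, p + k - a - b)].

(* Main.v *)
Require Import Defs.
From mathcomp Require Import all_boot all_order all_algebra zify.
Import Order.TTheory GRing.Theory Num.Theory.
Local Open Scope ring_scope.

Lemma key (l m n : weight) (X Y : int) :
  A3 l m n = X * 3 -> B3 l m n = Y * 3 -> 0 <= X -> 0 <= Y ->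
  [/\ Aval l m n = X, Bval l m n = Y & AB_ok l m n].
Proof.
move=> hA hB hX hY; rewrite /Aval /Bval /AB_ok hA hB !mulzK //.
split=> //; apply/and4P; split; rewrite ?dvdz_mull //; lia.
Qed.

Lemma inR_of k (l m n : weight) (X Y : int) :
  A3 l m n = X * 3 -> B3 l m n = Y * 3 -> 0 <= X -> 0 <= Y ->
  inPk k n ->
  let M := Num.max (l.1 + l.2) (Num.max (m.1 + m.2) (Num.max (n.1 + n.2)
  (Num.max (X - l.1) (Num.max (X - m.1) (Num.max (X - n.2)
  (Num.max (Y - l.2) (Num.max (Y - m.2) (Y - n.1)))))))) in
  M <= Num.min X Y -> M <= k -> inR k l m n.
Proof.
move=> hA hB hX hY hP M h1 h2.
have [eA eB ok] := @key _ _ _ _ _ hA hB hX hY.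
rewrite /inR hP /fusionN /k0min /k0max eA eB ok /=.
rewrite -/M h1 h2 /=.
move: h1; clearbody M; rewrite le_min => /andP[u1 u2].
have: M <= Num.min X Y by rewrite le_min u1 u2.
move: (Num.min X Y) => z hz; apply/eqP; lia.
Qed.

Ltac splt := repeat match goal with |- is_true (_ && _) => apply/andP; split end.

Theorem mainTheorem11 (a b k : int) :
  2 <= b -> b <= a -> a + b + 1 <= k -> k <= a + 2 * b - 1 ->
  forall ij : weight, Q3 a b k ij ->
    [/\ inR k (a, b) ij (w2 a b), inR k (a, b) ij (w3 a b),
        inR k (a, b) ij (w4 a b) & inR k (a, b) ij (w6 a b)].
Proof.
move=> h1 h2 h3 h4 ij [p [hp1 hp2 ->]].
split.
- apply: (@inR_of _ _ _ _ (2*a+2*b+p-k) (a+b+1+p)); rewrite /A3 /B3 /inPk /= ?ge_max ?le_min; splt; lia.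
- apply: (@inR_of _ _ _ _ (2*a+2*b+p-k-1) (a+b+p)); rewrite /A3 /B3 /inPk /= ?ge_max ?le_min; splt; lia.
- apply: (@inR_of _ _ _ _ (2*a+2*b+p-k) (a+b+p-1)); rewrite /A3 /B3 /inPk /= ?ge_max ?le_min; splt; lia.
- apply: (@inR_of _ _ _ _ (2*a+2*b+p-k-1) (a+b+p-1)); rewrite /A3 /B3 /inPk /= ?ge_max ?le_min; splt; lia.
Qed.
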